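(* Let $R>0$ and let $A\subset\mathbb{R}^d$ be an $R$-supported body. Then $A$ is an $R$-body if and only if $$A=A_R\cap\Big(\bigcap_{a\in\partial A}C^a_{\mathcal{N}_R(A,a)}\Big).$$
   Context: A body is a nonempty closed subset of $\mathbb{R}^d$; $S^{d-1}$ is the unit sphere; $B(x)=\{y:|y-x|<R\}$; $A_R=\{x:\operatorname{dist}(x,A)<R\}$. A body $A$ is an $R$-body if every $y\notin A$ lies in some open ball of radius $R$ disjoint from $A$ (so $\mathbb{R}^d$ is an $R$-body). For $a\in\partial A$, $\mathcal{N}_R(A,a)=\{v\in S^{d-1}: A\cap B(a+Rv)=\emptyset\}$; $A$ is $R$-supported if $\mathcal{N}_R(A,a)\ne\emptyset$ for all $a\in\partial A$. For nonempty closed $\mathcal K\subset S^{d-1}$ and $x\in\mathbb{R}^d$, $C^x_{\mathcal K}=\bigcap_{v\in\mathcal K}(\mathbb{R}^d\setminus B(x+Rv))$. An intersection over an empty index set is $\mathbb{R}^d$. *)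

(* Defs.v *)
From mathcomp Require Import all_boot all_order all_algebra.
From mathcomp Require Import reals.
Set Implicit Arguments. Unset Strict Implicit. Unset Printing Implicit Defensive.
Import Order.TTheory GRing.Theory Num.Theory.
Local Open Scope ring_scope.

Section Defs.
Variables (R : realType) (d : nat).
Notation pt := 'rV[R]_d.

Definition enorm (x : pt) : R := Num.sqrt (\sum_(i < d) x ord0 i ^+ 2).
Definition edist (x y : pt) : R := enorm (x - y).

Definition oball (x : pt) (r : R) : pt -> Prop := fun y => edist y x < r.

Definition usphere : pt -> Prop := fun v => enorm v = 1.

Definition eclosed (A : pt -> Prop) : Prop :=
  forall x, (forall e : R, 0 < e -> exists y, A y /\ edist y x < e) -> A x.

Definition body (A : pt -> Prop) : Prop := (exists a, A a) /\ eclosed A.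

Definition boundary (A : pt -> Prop) (a : pt) : Prop :=
  forall e : R, 0 < e ->
    (exists y, A y /\ edist y a < e) /\ (exists y, ~ A y /\ edist y a < e).

(* A_R = {x : dist(x, A) < R} *)
Definition thick (A : pt -> Prop) (r : R) : pt -> Prop :=
  fun x => exists a, A a /\ edist x a < r.

Definition Rbody (r : R) (A : pt -> Prop) : Prop :=
  forall y, ~ A y -> exists x, oball x r y /\ (forall z, A z -> ~ oball x r z).

Definition normalsR (r : R) (A : pt -> Prop) (a : pt) : pt -> Prop :=
  fun v => usphere v /\ (forall z, A z -> ~ oball (a + r *: v) r z).

Definition Rsupported (r : R) (A : pt -> Prop) : Prop :=
  forall a, A a -> boundary A a -> exists v, normalsR r A a v.

Definition Ccap (r : R) (K : pt -> Prop) (x : pt) : pt -> Prop :=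
  fun y => forall v, K v -> ~ oball (x + r *: v) r y.

End Defs.

(* Main.v *)
From mathcomp Require Import all_boot all_order all_algebra.
From mathcomp Require Import all_classical all_reals all_analysis.
From mathcomp Require Import ring lra.
Require Import Defs.
Import Order.TTheory GRing.Theory Num.Theory.
Import numFieldTopology.Exports numFieldNormedType.Exports.
Set Implicit Arguments.
Local Open Scope ring_scope.

Section Norms.
Context {R : realType} {d : nat}.
Notation pt := 'rV[R]_d.
Implicit Types (u v x y z : pt).

Definition sqN (v : pt) : R := \sum_(i < d) v ord0 i ^+ 2.
Definition dotp (u v : pt) : R := \sum_(i < d) u ord0 i * v ord0 i.

Lemma sqN_ge0 v : 0 <= sqN v.
Proof. by apply: sumr_ge0 => i _; rewrite sqr_ge0. Qed.

Lemma enorm_ge0 v : 0 <= enorm v.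
Proof. exact: sqrtr_ge0. Qed.

Lemma enorm_sq v : enorm v ^+ 2 = sqN v.
Proof. by rewrite /enorm sqr_sqrtr // sqN_ge0. Qed.

Lemma sqND u v : sqN (u + v) = sqN u + 2 * dotp u v + sqN v.
Proof.
rewrite /sqN /dotp mulr_sumr -!big_split /=; apply: eq_bigr => i _.
rewrite mxE; ring.
Qed.

Lemma sqNZ k v : sqN (k *: v) = k ^+ 2 * sqN v.
Proof.
rewrite /sqN mulr_sumr; apply: eq_bigr => i _; rewrite mxE; ring.
Qed.

Lemma dotp_sq u v : dotp u v ^+ 2 <= sqN u * sqN v.
Proof.
have H s : 0 <= s ^+ 2 * sqN u - 2 * s * dotp u v + sqN v.
  have := sqN_ge0 (s *: u - v).
  have -> : s *: u - v = s *: u + (-1) *: v by rewrite scaleN1r.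
  rewrite sqND sqNZ sqNZ.
  have -> : dotp (s *: u) ((-1) *: v) = - s * dotp u v.
    rewrite /dotp mulr_sumr; apply: eq_bigr => i _; rewrite !mxE; ring.
  move=> h; apply: le_trans h _; rewrite le_eqVlt; apply/orP; left; apply/eqP; ring.
have Hu := sqN_ge0 u; have Hv := sqN_ge0 v.
have [u0|upos] := eqVneq (sqN u) 0.
  have [D0|Dn0] := eqVneq (dotp u v) 0; first by rewrite D0 u0; lra.
  have := H ((sqN v + 1) / dotp u v); rewrite u0.
  have -> : 2 * ((sqN v + 1) / dotp u v) * dotp u v = 2 * (sqN v + 1).
    by field.
  nra.
have up : 0 < sqN u by rewrite lt_def upos Hu.
have := H (dotp u v / sqN u).
have -> : (dotp u v / sqN u) ^+ 2 * sqN u - 2 * (dotp u v / sqN u) * dotp u v + sqN v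
   = (sqN u * sqN v - dotp u v ^+ 2) / sqN u by field.
rewrite pmulr_lge0 ?invr_gt0 //; lra.
Qed.

Lemma enormD u v : enorm (u + v) <= enorm u + enorm v.
Proof.
rewrite -(ler_pXn2r (_ : 0 < 2)%N) ?nnegrE ?addr_ge0 ?enorm_ge0 //.
rewrite enorm_sq sqND sqrrD !enorm_sq lerD2r lerD2l.
have h1 := dotp_sq u v.
have : dotp u v <= enorm u * enorm v.
  have e : sqN u * sqN v = (enorm u * enorm v) ^+ 2 by rewrite exprMn !enorm_sq.
  rewrite e in h1.
  have := mulr_ge0 (enorm_ge0 u) (enorm_ge0 v).
  nra.
lra.
Qed.

Lemma enormZ k v : enorm (k *: v) = `|k| * enorm v.
Proof. by rewrite /enorm -/(sqN _) sqNZ sqrtrM ?sqr_ge0 // sqrtr_sqr. Qed.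

Lemma enormN v : enorm (- v) = enorm v.
Proof. by rewrite -scaleN1r enormZ normrN normr1 mul1r. Qed.

Lemma enorm0 : enorm (0:pt) = 0.
Proof. by rewrite -(scale0r (0:pt)) enormZ normr0 mul0r. Qed.

Lemma edistC x y : edist x y = edist y x.
Proof. by rewrite /edist -enormN opprB. Qed.

Lemma edistxx x : edist x x = 0.
Proof. by rewrite /edist subrr enorm0. Qed.

Lemma edist_tri x y z : edist x z <= edist x y + edist y z.
Proof. rewrite /edist; have -> : x - z = (x - y) + (y - z) by rewrite addrA subrK.
exact: enormD. Qed.

Lemma edist_ge0 x y : 0 <= edist x y.
Proof. exact: enorm_ge0. Qed.

Lemma coord_le_enorm v i : `|v ord0 i| <= enorm v.
Proof.
rewrite -(ler_pXn2r (_ : 0 < 2)%N) ?nnegrE ?enorm_ge0 // enorm_sq real_normK ?num_real //.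
rewrite /sqN (bigD1 i) //= lerDl; apply: sumr_ge0 => j _; exact: sqr_ge0.
Qed.


Lemma coord_le_mx v i : `|v ord0 i| <= `|v|.
Proof.
by rewrite [leRHS]/Num.norm /= mx_normrE; apply/bigmax_geP; right => /=; exists (ord0, i).
Qed.

Lemma mx_le_enorm v : `|v| <= enorm v.
Proof.
rewrite [leLHS]/Num.norm /= mx_normrE; apply: bigmax_le => [|[i j] _]; first exact: enorm_ge0.
by rewrite /= (ord1 i); exact: coord_le_enorm.
Qed.

Lemma enorm_le_mx v : enorm v <= d.+1%:R * `|v|.
Proof.
have hv : 0 <= `|v| by [].
rewrite -(ler_pXn2r (_ : 0 < 2)%N) ?nnegrE ?enorm_ge0 ?mulr_ge0 // enorm_sq.
apply: (@le_trans _ _ (d%:R * `|v| ^+ 2)).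
  rewrite /sqN; apply: (@le_trans _ _ (\sum_(i < d) `|v| ^+ 2)).
    apply: ler_sum => i _; have h1 := coord_le_mx v i.
    have h2 : 0 <= `|v ord0 i| by [].
    rewrite -real_normK ?num_real //; nra.
  by rewrite sumr_const card_ord mulr_natl.
have hd : 0 <= d%:R :> R by [].
rewrite exprMn -natrX; apply: ler_wpM2r; first exact: sqr_ge0.
rewrite ler_nat; apply: (@leq_trans d.+1); first exact: leqnSn.
by rewrite expnS leq_pmulr.
Qed.

Lemma nbhs_edist (p : pt) (e : R) : 0 < e -> nbhs p (fun z : pt => edist z p < e).
Proof.
move=> e0; apply/nbhs_ballP; exists (e / d.+1%:R) => /=; first by rewrite divr_gt0.
move=> z; rewrite -ball_normE /ball_ /= => hz.
rewrite /edist -enormN opprB.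
apply: le_lt_trans (enorm_le_mx _) _.
by rewrite mulrC -ltr_pdivlMr.
Qed.

Lemma eclosed_closed (K : set pt) : eclosed K -> closed K.
Proof.
move=> HK p Kp; apply: HK => e e0.
by have [z [Kz Bz]] := Kp _ (nbhs_edist p e e0); exists z.
Qed.

Lemma edist_cont c : continuous (fun a : pt => edist c a).
Proof.
move=> a; apply: (proj2 (@cvgrPdist_lt _ _ _ (nbhs a) (nbhs_filter a) _ _)) => e e0.
apply: filterS (nbhs_edist a e e0) => b /= hb.
have h1 := edist_tri c b a; have h2 := edist_tri c a b.
rewrite (edistC a b) in h2.
rewrite ltr_norml; apply/andP; split; lra.
Qed.

Lemma bounded_of (K : set pt) M : (forall a, K a -> enorm a <= M) -> bounded_set K.
Proof.
move=> HK; exists M; split; first exact: num_real.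
move=> N MN a Ka /=; apply: le_trans (mx_le_enorm a) _.
by apply: le_trans (HK a Ka) _; exact: ltW.
Qed.

End Norms.

Theorem mainTheorem13 (R : realType) (d : nat) (r : R) (A : 'rV[R]_d -> Prop) :
  0 < r -> body A -> Rsupported r A ->
  (Rbody r A <->
   (forall y, A y <->
      (thick A r y /\
       (forall a, A a -> boundary A a -> Ccap r (normalsR r A a) a y)))).
Proof.
move=> r0 [[a00 Aa00] Acl] _; split; last first.
  move=> H y nAy.
  have [Ht|Hnt] := pselect (thick A r y).
    have : ~ (forall a, A a -> boundary A a -> Ccap r (normalsR r A a) a y).
      by move=> Hc; apply: nAy; apply/H.
    move=> /existsNP [a /not_implyP [Aa /not_implyP [Ba /existsNP [v /not_implyP [Nv Ov]]]]].
    exists (a + r *: v); split; first exact: contrapT.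
    by case: Nv.
  exists y; split; first by rewrite /oball edistxx.
  by move=> z Az Oz; apply: Hnt; exists z; split => //; rewrite edistC.
move=> Rb y; split.
  move=> Ay; split; first by exists y; split => //; rewrite edistxx.
  by move=> a Aa Ba v [_ Hv]; exact: Hv y Ay.
move=> [[a0 [Aa0 ya0]] Hc]; apply: contrapT => nAy.
have [x [Oxy Dx]] := Rb y nAy.
pose w := y - x.
pose c := fun t : R => x + t *: w.
have hw := enorm_ge0 w.
have dyc t : 0 <= t <= 1 -> edist y (c t) < r.
  move=> /andP[t0 t1].
  rewrite /edist /c.
  have -> : y - (x + t *: w) = (1 - t) *: w by rewrite scalerBl scale1r opprD addrA.
  rewrite enormZ ger0_norm ?subr_ge0 //.
  have : enorm w < r by [].
  nra.
have dcc t s : edist (c t) (c s) = `|t - s| * enorm w.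
  rewrite /edist /c.
  have -> : x + t *: w - (x + s *: w) = (t - s) *: w.
    by rewrite opprD addrACA subrr add0r scalerBl.
  by rewrite enormZ.
pose S : set R := fun t => 0 <= t <= 1 /\ exists a, A a /\ edist (c t) a <= r.
have S1 : S 1.
  split; first by rewrite ler01 lexx.
  exists a0; split => //.
  have -> : c 1 = y by rewrite /c scale1r /w addrC subrK.
  exact: ltW.
have hlb : lbound S 0 by move=> t [/andP[]].
have hinf : has_inf S by split; [exists 1 | exists 0].
pose ts := inf S.
have ts0 : 0 <= ts by apply: lb_le_inf => //; exists 1.
have ts1 : ts <= 1 by exact: (ge_inf hinf.2 S1).
have D : forall z, A z -> r <= edist (c ts) z.
  move=> z Az; rewrite leNgt; apply/negP => hz.
  have [tsle|tsgt] := leP ts 0.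
    have e0 : ts = 0 by apply/eqP; rewrite eq_le tsle ts0.
    have : c ts = x by rewrite /c e0 scale0r addr0.
    move=> ex; rewrite ex in hz.
    by apply: (Dx z Az); rewrite /oball edistC.
  pose del := r - edist (c ts) z.
  have del0 : 0 < del by rewrite subr_gt0.
  pose q := del / (enorm w + 1).
  have q0 : 0 < q by rewrite divr_gt0 // ltr_wpDl.
  have hq : q * (enorm w + 1) = del by rewrite /q mulfVK // gt_eqF // ltr_wpDl.
  pose eta := Num.min ts q.
  have eta1 : eta <= ts by rewrite ge_min lexx.
  have eta2 : eta <= q by rewrite ge_min lexx orbT.
  have eta0 : 0 < eta by rewrite lt_min tsgt q0.
  pose t := ts - eta / 2.
  have St : S t.
    split; first by apply/andP; split; rewrite /t; lra.
    exists z; split => //.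
    apply: le_trans (edist_tri (c t) (c ts) z) _.
    rewrite dcc.
    have -> : t - ts = - (eta / 2) by rewrite /t; ring.
    rewrite normrN ger0_norm; last lra.
    have : edist (c ts) z = r - del by rewrite /del; ring.
    move=> ->; nra.
  have := ge_inf hinf.2 St; rewrite -/ts /t; lra.
have E : forall eps, 0 < eps -> exists a, A a /\ edist (c ts) a <= r + eps.
  move=> eps eps0.
  have q0 : 0 < eps / (enorm w + 1) by rewrite divr_gt0 // ltr_wpDl.
  have hq : eps / (enorm w + 1) * (enorm w + 1) = eps by rewrite mulfVK // gt_eqF // ltr_wpDl.
  have [t St tlt] := inf_adherent q0 hinf.
  have tst : ts <= t by exact: (ge_inf hinf.2 St).
  have [_ [a [Aa hta]]] := St.
  exists a; split => //.
  apply: le_trans (edist_tri (c ts) (c t) a) _.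
  rewrite dcc distrC ger0_norm ?subr_ge0 //.
  move: tlt; rewrite -/ts => tlt.
  nra.
pose K : set 'rV[R]_d := fun a => A a /\ edist (c ts) a <= r + 1.
have K0 : (K !=set0)%classic by have [a ha] := E 1 ltr01; exists a.
have Kc : compact K.
  apply: bounded_closed_compact.
    apply: (@bounded_of _ _ K (enorm (c ts) + (r + 1))) => a [_ ha].
    have := enormD (c ts) (a - c ts).
    rewrite addrC subrK.
    have -> : enorm (a - c ts) = edist (c ts) a by rewrite edistC.
    lra.
  apply: eclosed_closed => p Hp; split.
    apply: Acl => e e0; have [z [[Az _] hz]] := Hp e e0; by exists z.
  rewrite leNgt; apply/negP => hp.
  have [z [[_ hz1] hz2]] := Hp (edist (c ts) p - (r + 1)) (ltac:(by rewrite subr_gt0)).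
  have := edist_tri (c ts) z p; lra.
have Kcont : {within K, continuous (fun a => edist (c ts) a)}%classic.
  by apply: continuous_subspaceT; exact: edist_cont.
have [as_ Kas minas] := EVT_min_rV K0 Kc Kcont.
have [Aas _] := set_mem Kas.
have ha_eq : edist (c ts) as_ = r.
  apply/eqP; rewrite eq_le D // andbT leNgt; apply/negP => hm.
  pose eps := Num.min 1 ((edist (c ts) as_ - r) / 2).
  have eps1 : eps <= 1 by rewrite ge_min lexx.
  have eps2 : eps <= (edist (c ts) as_ - r) / 2 by rewrite ge_min lexx orbT.
  have eps0 : 0 < eps by rewrite lt_min ltr01 divr_gt0 // subr_gt0.
  have [a [Aa ha]] := E eps eps0.
  have : edist (c ts) as_ <= edist (c ts) a.
    by apply: minas; apply: mem_set; split => //; lra.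
  lra.
pose u := c ts - as_.
pose v := r^-1 *: u.
have hv : as_ + r *: v = c ts.
  by rewrite /v scalerA mulfV ?gt_eqF // scale1r /u addrC subrK.
have Nv : normalsR r A as_ v.
  split.
    rewrite /usphere /v enormZ ger0_norm ?invr_ge0 ?ltW //.
    have -> : enorm u = edist (c ts) as_ by [].
    by rewrite ha_eq mulVf // gt_eqF.
  move=> z Az; rewrite hv /oball edistC => hz.
  have := D z Az; lra.
have Ba : boundary A as_.
  move=> e e0; split; first by exists as_; split => //; rewrite edistxx.
  pose s := e / (e + r).
  have hs : s * (e + r) = e by rewrite /s mulfVK // gt_eqF // addr_gt0.
  have s0 : 0 < s by rewrite divr_gt0 // addr_gt0.
  have s1 : s < 1.
    by rewrite /s ltr_pdivrMr ?addr_gt0 // mul1r ltrDl.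
  exists (as_ + s *: u); split.
    move=> Ap; have := D _ Ap.
    rewrite /edist.
    have -> : c ts - (as_ + s *: u) = (1 - s) *: u.
      by rewrite opprD addrA scalerBl scale1r.
    have eu : enorm u = r by rewrite -ha_eq.
    rewrite enormZ eu ger0_norm; last by rewrite subr_ge0 ltW.
    nra.
  rewrite /edist.
  have -> : as_ + s *: u - as_ = s *: u by rewrite addrC addKr.
  have eu : enorm u = r by rewrite -ha_eq.
  rewrite enormZ eu ger0_norm; last exact: ltW.
  nra.
apply: (Hc as_ Aas Ba v Nv).
rewrite hv /oball.
by apply: dyc; rewrite ts0 ts1.
Qed.
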